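(* Let $n\ge 2$ and $v\in A_n$. Then $$\ell_{T(A_n)}(v)=\begin{cases} n-\mathrm{cyc}(v) & \text{if } 1,2 \text{ are in different cycles of } v,\\ n-\mathrm{cyc}(v)-1 & \text{if } 1,2 \text{ are in the same cycle of } v.\end{cases}$$
   Context: $A_n$ is the alternating group on $\{1,\dots,n\}$, $T(A_n)=\{(1\,2)(i\,j)\mid 1\le i<j\le n\}$, and $\ell_{T(A_n)}(v)=\min\{k\ge 0\mid v=t_1\cdots t_k,\ t_i\in T(A_n)\}$. $\mathrm{cyc}(v)$ is the number of cycles of $v$ in its disjoint cycle decomposition, fixed points counted. *)

(* Defs.v *)
From mathcomp Require Import all_boot all_fingroup all_solvable.
Set Implicit Arguments. Unset Strict Implicit. Unset Printing Implicit Defensive.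
Local Open Scope group_scope.

(* Points 1 and 2 of {1,...,n} are the ordinals 0 and 1 of 'I_n (needs 1 < n). *)
Definition pt1 (n : nat) (hn : (1 < n)%N) : 'I_n := Ordinal (ltnW hn).
Definition pt2 (n : nat) (hn : (1 < n)%N) : 'I_n := Ordinal hn.

Definition TA (n : nat) (hn : (1 < n)%N) : {set {perm 'I_n}} :=
  [set t : {perm 'I_n} | [exists i : 'I_n, exists j : 'I_n,
     ((i < j)%N) && (t == tperm (pt1 hn) (pt2 hn) * tperm i j)]].

Definition TA_prod (n : nat) (hn : (1 < n)%N) (v : {perm 'I_n}) (k : nat) : Prop :=
  exists s : seq {perm 'I_n},
    [/\ size s = k, all (fun t => t \in TA hn) s & v = \prod_(t <- s) t].

Definition TA_length_is (n : nat) (hn : (1 < n)%N) (v : {perm 'I_n}) (m : nat) : Prop :=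
  TA_prod hn v m /\ forall k, TA_prod hn v k -> (m <= k)%N.

(* number of cycles of v, fixed points included *)
Definition cyc (n : nat) (v : {perm 'I_n}) : nat := #|porbits v|.

(* Main.v *)
Require Import Defs.
From mathcomp Require Import all_boot all_fingroup all_solvable.
From mathcomp Require Import zify.
Set Implicit Arguments. Unset Strict Implicit. Unset Printing Implicit Defensive.
Local Open Scope group_scope.

Section S.
Variable n : nat.
Variable hn : (1 < n)%N.
Let a := pt1 hn.
Let b := pt2 hn.
Let s := tperm a b.

Lemma ab_neq : a != b.
Proof. by rewrite /a /b /pt1 /pt2 -val_eqE. Qed.

Lemma cyc_le (u : {perm 'I_n}) : (cyc u <= n)%N.
Proof. by rewrite /cyc /porbits (leq_trans (leq_imset_card _ _)) // card_ord. Qed.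

Lemma cyc_tperm_ge (u : {perm 'I_n}) x y : (cyc u <= cyc (tperm x y * u) + 1)%N.
Proof.
have H := porbits_mul_tperm u x y; rewrite /cyc.
case: (eqVneq x y) H => [<-|ne] H.
  by move: H; rewrite porbit_id /=; lia.
by move: H; case: (x \in porbit u y) => /=; lia.
Qed.

Definition C (u : {perm 'I_n}) := (cyc u + cyc (s * u))%N.

Definition mm (u : {perm 'I_n}) :=
  (if b \in porbit u a then n - cyc u - 1 else n - cyc u)%N.

Lemma key (u : {perm 'I_n}) : (2 * mm u + C u = 2 * n - 1)%N.
Proof.
have H := porbits_mul_tperm u a b; rewrite -/s ab_neq /= porbit_sym in H.
have := cyc_le (s * u); have := cyc_le u.
rewrite /mm /C /cyc in H *; case: (b \in porbit u a) H => /= H.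
all: rewrite ?double0 /= in H; set c1 := #|porbits u| in H *; set c2 := #|porbits (s * u)| in H *.
all: clearbody c1 c2; lia.
Qed.

Lemma C_step (u : {perm 'I_n}) x y : (C u <= C (s * tperm x y * u) + 2)%N.
Proof.
rewrite /C.
have -> : s * (s * tperm x y * u) = tperm x y * u by rewrite !mulgA tperm2 mul1g.
have -> : s * tperm x y * u = (tperm x y) ^ s * (s * u).
  by rewrite /conjg /s -!mulgA (mulgA (tperm a b) (tperm a b)) tperm2 mul1g tpermV.
rewrite tpermJ.
have := cyc_tperm_ge u x y; have := cyc_tperm_ge (s * u) (s x) (s y).
move: (cyc u) (cyc (s*u)) (cyc (tperm x y * u)) (cyc (tperm (s x) (s y) * (s * u))); lia.
Qed.

Lemma porbit1 x : porbit (1 : {perm 'I_n}) x = [set x].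
Proof. by rewrite porbit.unlock cycle1 imset_set1 /aperm perm1. Qed.

Lemma cyc1 : cyc (1 : {perm 'I_n}) = n.
Proof.
rewrite /cyc /porbits card_imset ?card_ord // => x y.
by rewrite !porbit1 => /setP /(_ x); rewrite !inE eqxx => /esym/eqP.
Qed.

Lemma mm1 : mm 1 = 0%N.
Proof.
rewrite /mm porbit1 inE eq_sym (negbTE ab_neq) cyc1; lia.
Qed.

Lemma memTA p q : p != q -> s * tperm p q \in TA hn.
Proof.
move=> ne; rewrite inE; case: (ltngtP p q) => [lt|gt|/val_inj eq].
- by apply/existsP; exists p; apply/existsP; exists q; rewrite lt eqxx.
- by apply/existsP; exists q; apply/existsP; exists p; rewrite gt tpermC eqxx.
- by rewrite eq eqxx in ne.
Qed.

Lemma lower (l : seq {perm 'I_n}) : all (fun t => t \in TA hn) l ->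
  (2 * n - 1 <= C (\prod_(t <- l) t) + 2 * size l)%N.
Proof.
elim: l => [|t l IH] /=.
  by rewrite big_nil; have := key 1; rewrite mm1; move: (C 1); lia.
case/andP=> /[swap] /IH {}IH; rewrite inE => /existsP[i /existsP[j /andP[_ /eqP ->]]].
rewrite big_cons -/a -/b -/s -mulgA.
have := C_step (\prod_(t <- l) t) i j; rewrite mulgA.
move: IH; move: (C _) (C _); lia.
Qed.


Lemma exists_moved (v : {perm 'I_n}) : v != 1 -> v != s ->
  exists c, [/\ c != a, c != b & v c != c].
Proof.
move=> v1 vs.
have [c /and3P[h1 h2 h3]|none] := pickP (fun c => [&& c != a, c != b & v c != c]).
  by exists c.
have fx c : c != a -> c != b -> v c = c.
  by move=> h1 h2; move: (none c); rewrite h1 h2 /= => /negbFE/eqP.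
have Hv x : (x == a) || (x == b) -> (v x == a) || (v x == b).
  move=> hx; apply/negPn/negP => /norP[h1 h2]; have := fx (v x) h1 h2.
  by move/perm_inj => e; move: h1 h2 hx; rewrite e => /negbTE -> /negbTE ->.
have ab := ab_neq.
case/orP: (Hv a (introT orP (or_introl (eqxx a)))) => /eqP va.
- have vb : v b = b.
    case/orP: (Hv b (introT orP (or_intror (eqxx b)))) => /eqP vb //; move: ab; rewrite -va in vb.
    by rewrite (perm_inj vb) eqxx.
  case/eqP: v1; apply/permP => x; rewrite perm1.
  case: (eqVneq x a) => [->//|xa]; case: (eqVneq x b) => [->//|xb].
  exact: fx.
- have vb : v b = a.
    case/orP: (Hv b (introT orP (or_intror (eqxx b)))) => /eqP vb //; move: ab; rewrite -vb in va.
    by rewrite (perm_inj va) eqxx.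
  case/eqP: vs; apply/permP => x; rewrite /s.
  case: tpermP => [->|->|/eqP xa /eqP xb] //; exact: fx.
Qed.

Lemma descent (v : {perm 'I_n}) : v \in Alt 'I_n -> v != 1 ->
  exists t w, [/\ t \in TA hn, v = t * w, w \in Alt 'I_n & (mm w + 1 = mm v)%N].
Proof.
move=> hv v1.
have vs : v != s.
  apply: contraTneq hv => ->; rewrite Alt_even /s odd_tperm ab_neq //.
have [c [ca cb vc]] := exists_moved v1 vs.
pose z := v^-1 c.
have vz : v z = c by rewrite /z permKV.
have zc : z != c by apply/eqP => e; move: vc; rewrite -{1}e vz eqxx.
pose tau := tperm z c.
pose w := s * tau * v.
have sc : s c = c by rewrite /s tpermD // eq_sym.
exists (tau * s), w; split.
- have -> : tau * s = s * tperm (s z) (s c).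
    by rewrite -tpermJ /conjg !mulgA mulgV mul1g.
  by apply: memTA; rewrite (inj_eq perm_inj).
- by rewrite /w /s !mulgA -(mulgA _ (tperm a b) (tperm a b)) tperm2 mulg1 /tau tperm2 mul1g.
- move: hv; rewrite !Alt_even /w !odd_permM /tau /s !odd_tperm ab_neq zc.
  by case: (odd_perm v).
have kw := key w; have kv := key v.
have e1 : (cyc (tau * v) = cyc v + 1)%N.
  have H := porbits_mul_tperm v z c.
  have zv : z \in porbit v c.
    by rewrite porbit_sym -vz; have := mem_porbit v 1 z; rewrite expg1.
  by move: H; rewrite zv zc /= /cyc addn0.
have e2 : (cyc w = cyc (s * v) + 1)%N.
  have -> : w = tperm (s z) (s c) * (s * v).
    by rewrite -tpermJ /conjg /w /s -!mulgA (mulgA (tperm a b) (tperm a b)) tperm2 mul1g tpermV.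
  have H := porbits_mul_tperm (s * v) (s z) (s c).
  have zv : s z \in porbit (s * v) (s c).
    rewrite porbit_sym sc; have := mem_porbit (s * v) 1 (s z).
    by rewrite expg1 permM /s tpermK -/s vz.
  by move: H; rewrite zv (inj_eq perm_inj) zc /= /cyc addn0.
have e3 : s * w = tau * v by rewrite /w !mulgA /s tperm2 mul1g.
move: kw kv; rewrite /C e3 e1 e2.
move: (mm w) (mm v) (cyc v) (cyc (s * v)); lia.
Qed.

Lemma upper (k : nat) (v : {perm 'I_n}) : mm v = k -> v \in Alt 'I_n -> TA_prod hn v k.
Proof.
elim: k v => [|k IH] v hk hv.
  case: (eqVneq v 1) => [->|v1].
    by exists [::]; rewrite big_nil.
  have [t [w [_ _ _ e]]] := descent hv v1; move: e; rewrite hk; lia.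
case: (eqVneq v 1) => [e|v1]; first by move: hk; rewrite e mm1.
have [t [w [tT vE hw e]]] := descent hv v1.
have ew : mm w = k by move: e; rewrite hk; lia.
have [l [sz al wE]] := IH w ew hw.
rewrite vE wE.
by exists (t :: l); rewrite /= sz tT al big_cons.
Qed.

End S.

Theorem corollary6p4 (n : nat) (hn : (1 < n)%N) (v : {perm 'I_n})
  (hv : v \in Alt 'I_n) :
  TA_length_is hn v
    (if pt2 hn \in porbit v (pt1 hn) then n - cyc v - 1 else n - cyc v)%N.
Proof.
split; first exact: (upper (erefl _) hv).
move=> k [l [sz al ->]].
have := lower al; have := key hn (\prod_(t <- l) t); rewrite sz.
rewrite /mm; move: (C _ _); lia.
Qed.
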